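(* Let $k\ge1$. For every rational transduction $g:\Sigma^*\rightharpoonup\Lambda^*$ and every $k$-lexicographic transduction $f:\Lambda^*\rightharpoonup\Gamma^*$, the composition $f\circ g$ is $k$-lexicographic.
   Context: A rational transduction is one computed by a functional finite state transducer, i.e. a pair $(A,\mu)$ with: - $A$ a (possibly non-deterministic) finite automaton over $\Sigma$; - $\mu$ assigning an output word in $\Lambda^*$ to each transition; such that all accepting runs on a given input produce the same concatenated output. That common output is the image of the input. Alphabets are finite. For words $u,v$ of equal length over alphabets $\Sigma_1,\Sigma_2$, $u\otimes v$ is the word over $\Sigma_1\times\Sigma_2$ with $(u\otimes v)[i]=(u[i],v[i])$. A transduction is a partial function $f:\Sigma^*\rightharpoonup\Gamma^*$. A simple transduction is a transduction $f=\sum_{i=1}^n L_i\triangleright w_i$, where $L_1,\dots,L_n\subseteq\Sigma^*$ are pairwise disjoint regular languages and each $w_i\in\Gamma^{\le 1}$ is a word of length at most 1. It satisfies $f(u)=w_i$ if $u\in L_i$, and $f(u)$ is undefined if $u\notin\bigcup_iL_i$. An ordered alphabet is a pair $\lambda=(B,\prec)$ with $B$ a finite set and $\prec$ a strict linear order on $B$. The order is extended to $B^n$ for each $n$ by: $u\prec v$ iff there is $i\le n$ with $u[i]\prec v[i]$ and $u[j]=v[j]$ for all $i<j\le n$ (most significant letter on the right). For a transduction $f:(\Sigma\times B)^*\rightharpoonup\Gamma^*$, the transduction $\mathsf{maplex}_\lambda f:\Sigma^*\rightharpoonup\Gamma^*$ maps $u$ to $f(u\otimes b_1)f(u\otimes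 b_2)\cdots f(u\otimes b_m)$, where $b_1\prec\cdots\prec b_m$ is the increasing enumeration of all of $B^{|u|}$. It is defined on $u$ iff every $f(u\otimes b_j)$ is defined. The classes are defined inductively: - $\mathsf{Lex}_0$ is the class of simple transductions; - $\mathsf{Lex}_{k+1}=\{\mathsf{maplex}_\lambda f: \lambda=(B,\prec)\text{ an ordered alphabet},\ f:(\Sigma\times B)^*\rightharpoonup\Gamma^*\text{ in }\mathsf{Lex}_k\}$; - $\mathsf{Lex}=\bigcup_k\mathsf{Lex}_k$, the lexicographic transductions. Elements of $\mathsf{Lex}_k$ are called $k$-lexicographic. *)

(* Defs.v *)
From mathcomp Require Import all_boot.
Set Implicit Arguments. Unset Strict Implicit. Unset Printing Implicit Defensive.

(* Words over a finite alphabet S are [seq S]; a transduction is a partial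
   function [seq S -> option (seq G)] ([None] = undefined). *)
Definition transduction (S G : finType) := seq S -> option (seq G).

Record dfa (S : finType) := DFA {
  dstate : finType;
  dinit : dstate;
  dtrans : dstate -> S -> dstate;
  dfinal : pred dstate }.
Arguments dinit {S} d.
Arguments dtrans {S} d _ _.
Arguments dfinal {S} d _.

Definition dfa_accepts (S : finType) (A : dfa S) (u : seq S) : bool :=
  dfinal A (foldl (dtrans A) (dinit A) u).

Definition regular (S : finType) (L : seq S -> Prop) : Prop :=
  exists A : dfa S, forall u, L u <-> dfa_accepts A u.

(* A = (Q, I, F, delta) a non-deterministic automaton, delta ⊆ Q×S×Q given by
   [ttrans], and [tout q a q'] = mu(q,a,q') the output of that transition. *)
Record transducer (S L : finType) := Transducer {
  tstate : finType;
  tinit : pred tstate;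
  tfinal : pred tstate;
  ttrans : tstate -> S -> tstate -> bool;
  tout : tstate -> S -> tstate -> seq L }.
Arguments tinit {S L} t _.
Arguments tfinal {S L} t _.
Arguments ttrans {S L} t _ _ _.
Arguments tout {S L} t _ _ _.

Fixpoint produces (S L : finType) (T : transducer S L) (q : tstate T)
    (u : seq S) (w : seq L) : Prop :=
  match u with
  | [::] => tfinal T q /\ w = [::]
  | a :: u' => exists q' w', ttrans T q a q' /\ @produces S L T q' u' w' /\
                             w = tout T q a q' ++ w'
  end.
Arguments produces {S L} T q u w.

Definition t_accepts (S L : finType) (T : transducer S L) (u : seq S) (w : seq L) :=
  exists q, tinit T q /\ produces T q u w.

Definition functional (S L : finType) (T : transducer S L) : Prop :=
  forall u w1 w2, t_accepts T u w1 -> t_accepts T u w2 -> w1 = w2.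

Definition rational (S L : finType) (g : transduction S L) : Prop :=
  exists T : transducer S L, functional T /\
    forall u w, g u = Some w <-> t_accepts T u w.

Definition simple (S G : finType) (f : transduction S G) : Prop :=
  exists (n : nat) (L : 'I_n -> seq S -> Prop) (w : 'I_n -> seq G),
    (forall i, regular (L i)) /\
    (forall i j u, i != j -> L i u -> L j u -> False) /\
    (forall i, size (w i) <= 1) /\
    (forall u, (forall i, L i u -> f u = Some (w i)) /\
               ((forall i, ~ L i u) -> f u = None)).

Definition strict_linear (B : finType) (prec : rel B) : Prop :=
  [/\ (forall a, ~~ prec a a),
      (forall a b c, prec a b -> prec b c -> prec a c) &
      (forall a b, a != b -> prec a b || prec b a)].

(* u ≺ v on B^n: some position i with u[i] ≺ v[i] and u[j] = v[j] for all j > i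
   (most significant letter on the right). *)
Definition lexlt (B : finType) (prec : rel B) (u v : seq B) : Prop :=
  size u = size v /\
  exists i a b, onth u i = Some a /\ onth v i = Some b /\ prec a b /\
    forall j, i < j -> onth u j = onth v j.

Definition lex_enum (B : finType) (prec : rel B) (n : nat) (s : seq (seq B)) :=
  (forall b, (b \in s) = (size b == n)) /\
  (forall i j, i < j < size s -> lexlt prec (nth [::] s i) (nth [::] s j)).

(* concatenation of a list of partial outputs: defined iff all are defined *)
Definition cat_opt (G : finType) (ws : seq (option (seq G))) : option (seq G) :=
  foldr (fun o acc => obind (fun w => omap (cat w) acc) o) (Some [::]) ws.

Definition is_maplex (S B G : finType) (prec : rel B)
    (f : transduction (S * B)%type G) (g : transduction S G) : Prop :=
  forall u, exists s, lex_enum prec (size u) s /\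
    g u = cat_opt [seq f (zip u b) | b <- s].

Fixpoint lexk (k : nat) : forall (S G : finType), transduction S G -> Prop :=
  match k with
  | 0 => fun S G g => simple g
  | k'.+1 => fun S G g =>
      exists (B : finType) (prec : rel B), strict_linear prec /\
        exists f : transduction (S * B)%type G, lexk k' f /\ is_maplex prec f g
  end.

Definition compose (S L G : finType) (f : transduction L G) (g : transduction S L)
  : transduction S G := fun u => obind f (g u).

(* Main.v *)
Require Import Defs.
From mathcomp Require Import all_boot.
From Stdlib Require Import Classical ClassicalEpsilon.
Set Implicit Arguments. Unset Strict Implicit. Unset Printing Implicit Defensive.

Section Lex.
Variable T : eqType.
Variable r : rel T.

Fixpoint lexltb (u v : seq T) : bool :=
  match u, v with
  | a :: u', b :: v' => lexltb u' v' || ((u' == v') && r a b)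
  | _, _ => false
  end.

Lemma lexltb_size u v : lexltb u v -> size u = size v.
Proof.
elim: u v => [|a u IH] [|b v] //= /orP [/IH -> //| /andP [/eqP -> _]] //.
Qed.

Hypothesis rirr : irreflexive r.
Hypothesis rtr : transitive r.
Hypothesis rtot : forall a b, a != b -> r a b || r b a.

Lemma lexltb_irr : irreflexive lexltb.
Proof. by elim=> [|a u IH] //=; rewrite IH rirr andbF. Qed.

Lemma lexltb_trans : transitive lexltb.
Proof.
move=> v u w; elim: u v w => [|a u IH] [|b v] [|c w] //=.
case/orP=> [H1|/andP [/eqP E1 H1]] /orP [H2|/andP [/eqP E2 H2]].
- by rewrite (IH _ _ H1 H2).
- by rewrite -E2 H1.
- by rewrite E1 H2.
- by rewrite E1 E2 eqxx (rtr H1 H2) orbT.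
Qed.

Lemma lexltb_total u v : size u = size v -> u != v -> lexltb u v || lexltb v u.
Proof.
elim: u v => [|a u IH] [|b v] //= [Hs] Hne.
case E: (u == v).
  move/eqP: E => E; subst v; rewrite eqxx /=.
  have Hab : a != b by apply: contra Hne => /eqP ->.
  by rewrite lexltb_irr /=; apply: rtot.
have := IH _ Hs (negbT E); rewrite eq_sym E /=.
by case/orP=> ->; rewrite ?orbT.
Qed.

Lemma lexltb_cat u v u' v' : size u = size v ->
  lexltb (u ++ u') (v ++ v') = lexltb u' v' || (u' == v') && lexltb u v.
Proof.
elim: u v => [|a u IH] [|b v] //= Hs; first by rewrite andbF orbF.
case: Hs => Hs; rewrite IH // eqseq_cat //.
by case: (lexltb u' v'); case: (u' == v'); case: (lexltb u v); case: (u == v).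
Qed.

End Lex.

Lemma lexltbP (B : finType) (r : rel B) (u v : seq B) : reflect (lexlt r u v) (lexltb r u v).
Proof.
apply: (iffP idP).
  elim: u v => [|a u IH] [|b v] //= /orP [H|/andP [/eqP E H]].
    have [Hs [i [x [y [H1 [H2 [H3 H4]]]]]]] := IH _ H.
    split; first by rewrite /= Hs.
    exists i.+1, x, y; do 3! split => //.
    by case=> [|j] //= Hj; apply: H4.
  subst v; split=> //; exists 0, a, b; do 3! split => //.
  by case.
elim: u v => [|a u IH] [|b v] [Hs [i [x [y [H1 [H2 [H3 H4]]]]]]] //=;
  try by rewrite ?onth0n in H1 H2.
case: i H1 H2 H4 => [|i] /= H1 H2 H4.
  case: H1 => ?; case: H2 => ?; subst x y; rewrite H3 andbT.
  apply/orP; right; apply/eqP; apply: eq_from_onth => j.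
  exact: (H4 j.+1).
rewrite IH ?orTb //; split; first by case: Hs.
by exists i, x, y; do 3! split => //; move=> j Hj; apply: (H4 j.+1).
Qed.



Fixpoint allseqs (T : finType) (n : nat) : seq (seq T) :=
  if n is n'.+1 then [seq x :: u | x <- enum T, u <- allseqs T n'] else [:: [::]].

Lemma mem_allseqs (T : finType) n u : (u \in allseqs T n) = (size u == n).
Proof.
elim: n u => [|n IH] [|a u]; rewrite /= ?inE //.
  by apply/negbTE; apply/allpairsPdep => [[x [y [_ _ //]]]].
apply/allpairsPdep/idP => [[x [y [_ Hy [E1 E2]]]]|Hs].
  by rewrite E2 eqSS -IH.
by exists a, u; split; rewrite ?mem_enum ?IH.
Qed.

Lemma uniq_allseqs (T : finType) n : uniq (allseqs T n).
Proof.
elim: n => [|n IH] //=.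
apply: allpairs_uniq => //; first exact: enum_uniq.
by move=> [a u] [b v] _ _ /= [-> ->].
Qed.

Lemma lex_enum_sorted (B : finType) (prec : rel B) n s :
  transitive prec -> irreflexive prec ->
  lex_enum prec n s <-> ((forall b, (b \in s) = (size b == n)) /\ sorted (lexltb prec) s).
Proof.
move=> Htr Hirr; rewrite /lex_enum sorted_pairwise; last exact: lexltb_trans.
split=> [[H1 H2]|[H1 H2]]; split=> //.
  apply/(pairwiseP [::]) => i j Hi Hj Hij; apply/lexltbP; apply: H2.
  by rewrite Hij.
move=> i j /andP [Hij Hj]; apply/lexltbP.
by move/(pairwiseP [::]): H2; apply=> //; rewrite inE (ltn_trans Hij).
Qed.

Lemma sorted_le_lt (T : eqType) (lt : rel T) (s : seq T) :
  sorted (fun u v => (u == v) || lt u v) s -> uniq s -> sorted lt s.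
Proof.
case: s => // a l; elim: l a => [|b l IH] a // Hs Hu.
move: Hs; rewrite [sorted _ _]/= => /andP [Hab Hp].
move: Hu; rewrite cons_uniq => /andP [Hna Hu].
rewrite [sorted _ _]/=; apply/andP; split; last exact: IH.
move: Hab => /orP [/eqP E|//].
by move: Hna; rewrite E inE eqxx.
Qed.

Lemma lex_enum_exists (B : finType) (prec : rel B) n :
  strict_linear prec -> exists s, lex_enum prec n s.
Proof.
case=> Hirr0 Htr0 Htot.
have Hirr : irreflexive prec by move=> x; apply/negbTE.
have Htr : transitive prec by move=> y x z; apply: Htr0.
pose le := fun u v : seq B => (u == v) || lexltb prec u v.
exists (sort le (allseqs B n)).
apply/lex_enum_sorted => //; split.
  by move=> b; rewrite mem_sort mem_allseqs.
have Hs : sorted le (sort le (allseqs B n)).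
  apply: (sort_sorted_in (P := fun u => size u == n)).
    move=> u v /eqP Hu /eqP Hv; rewrite /le.
    case E: (u == v); first by [].
    have := lexltb_total Hirr Htot (etrans Hu (esym Hv)) (negbT E).
    by case/orP=> ->; rewrite ?orbT.
  by apply/allP=> x; rewrite mem_allseqs.
have Hu : uniq (sort le (allseqs B n)) by rewrite sort_uniq uniq_allseqs.
exact: sorted_le_lt Hs Hu.
Qed.

Lemma lex_enum_mem (B : finType) (prec : rel B) n s b :
  lex_enum prec n s -> (b \in s) = (size b == n).
Proof. by case. Qed.


Record nfa (S : finType) := NFA {
  nstate : finType;
  ninit : pred nstate;
  ntrans : nstate -> S -> nstate -> bool;
  nfinal : pred nstate }.
Arguments ninit {S} n _.
Arguments ntrans {S} n _ _ _.
Arguments nfinal {S} n _.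

Fixpoint nacc (S : finType) (A : nfa S) (q : nstate A) (u : seq S) : bool :=
  match u with
  | [::] => nfinal A q
  | a :: u' => [exists q', ntrans A q a q' && @nacc S A q' u']
  end.
Arguments nacc {S} A q u.

Definition nfa_accepts (S : finType) (A : nfa S) (u : seq S) :=
  [exists q, ninit A q && nacc A q u].

Lemma nfa_regular (S : finType) (A : nfa S) : regular (fun u => nfa_accepts A u).
Proof.
pose tr := fun (X : {set nstate A}) (a : S) => [set q' | [exists q in X, ntrans A q a q']].
exists (DFA [set q | ninit A q] tr (fun X => [exists q in X, nfinal A q])).
have H : forall u X, [exists q in foldl tr X u, nfinal A q] = [exists q in X, nacc A q u].
  elim=> [|a u IH] X //=; rewrite IH.
  apply/existsP/existsP => [[q' /andP [Hq' Hacc]]|[q /andP [Hq /existsP [q' /andP [Ht Hacc]]]]].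
    move: Hq'; rewrite inE => /existsP [q /andP [Hq Ht]].
    by exists q; rewrite Hq /=; apply/existsP; exists q'; rewrite Ht.
  by exists q'; rewrite Hacc andbT inE; apply/existsP; exists q; rewrite Hq.
move=> u; rewrite /dfa_accepts /= H /nfa_accepts.
split=> /existsP [q /andP [H1 H2]]; apply/existsP; exists q; move: H1; rewrite ?inE => ->; exact: H2.
Qed.

Lemma regular_ext (S : finType) (L1 L2 : seq S -> Prop) :
  (forall u, L1 u <-> L2 u) -> regular L1 -> regular L2.
Proof. move=> H [A HA]; exists A => u; rewrite -H; exact: HA. Qed.

Lemma regular_dfa (S : finType) (A : dfa S) : regular (fun u => dfa_accepts A u).
Proof. by exists A. Qed.

Lemma regular_not (S : finType) (L : seq S -> Prop) : regular L -> regular (fun u => ~ L u).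
Proof.
case=> A HA; exists (DFA (dinit A) (dtrans A) (fun q => ~~ dfinal A q)) => u.
rewrite /dfa_accepts /= HA /dfa_accepts; split; first by move/negP.
by move/negP.
Qed.

Definition prod_dfa (S : finType) (A1 A2 : dfa S) (op : bool -> bool -> bool) : dfa S :=
  @DFA S (dstate A1 * dstate A2)%type (dinit A1, dinit A2)
    (fun p a => (dtrans A1 p.1 a, dtrans A2 p.2 a)) (fun p => op (dfinal A1 p.1) (dfinal A2 p.2)).

Lemma prod_dfaE (S : finType) (A1 A2 : dfa S) op u :
  dfa_accepts (prod_dfa A1 A2 op) u = op (dfa_accepts A1 u) (dfa_accepts A2 u).
Proof.
rewrite /dfa_accepts /=.
suff -> : forall p, foldl (fun p a => (dtrans A1 p.1 a, dtrans A2 p.2 a)) p u =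
   (foldl (dtrans A1) p.1 u, foldl (dtrans A2) p.2 u) by [].
by elim: u => [|a u IH] [p1 p2] //=; rewrite IH.
Qed.

Lemma regular_and (S : finType) (L1 L2 : seq S -> Prop) :
  regular L1 -> regular L2 -> regular (fun u => L1 u /\ L2 u).
Proof.
case=> A1 H1 [A2 H2]; exists (prod_dfa A1 A2 andb) => u.
by rewrite prod_dfaE H1 H2; split; [case=> -> ->|case/andP].
Qed.

Lemma regular_or (S : finType) (L1 L2 : seq S -> Prop) :
  regular L1 -> regular L2 -> regular (fun u => L1 u \/ L2 u).
Proof.
case=> A1 H1 [A2 H2]; exists (prod_dfa A1 A2 orb) => u.
rewrite prod_dfaE H1 H2; split; first by case=> ->; rewrite ?orbT.
by case/orP; [left|right].
Qed.

Lemma regular_preim (S S' : finType) (phi : S' -> S) (L : seq S -> Prop) :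
  regular L -> regular (fun u => L (map phi u)).
Proof.
case=> A HA; exists (DFA (dinit A) (fun q a => dtrans A q (phi a)) (dfinal A)) => u.
rewrite HA /dfa_accepts /=; suff -> : forall q, foldl (dtrans A) q (map phi u) =
  foldl (fun q a => dtrans A q (phi a)) q u by [].
by elim: u => [|a u IH] q //=.
Qed.

Section Preim.
Variables (S L : finType) (T : transducer S L) (D : dfa L).

Definition pre_nfa : nfa S :=
  @NFA S (tstate T * dstate D)%type
    (fun p => tinit T p.1 && (p.2 == dinit D))
    (fun p x p' => ttrans T p.1 x p'.1 && (p'.2 == foldl (dtrans D) p.2 (tout T p.1 x p'.1)))
    (fun p => tfinal T p.1 && dfinal D p.2).

Lemma pre_naccP w q p :
  nacc pre_nfa (q, p) w <-> exists o, produces T q w o /\ dfinal D (foldl (dtrans D) p o).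
Proof.
elim: w q p => [|x w IH] q p /=.
  split; first by case/andP=> H1 H2; exists [::].
  by case=> o [[H1 ->] H2]; rewrite H1.
split.
  case/existsP=> [[q' p'] /andP [/andP [Ht /eqP Ep] /IH [o [Ho Hf]]]].
  exists (tout T q x q' ++ o); split; first by exists q', o.
  by rewrite foldl_cat -Ep.
case=> o [[q' [o' [Ht [Ho ->]]]] Hf].
apply/existsP; exists (q', foldl (dtrans D) p (tout T q x q')).
rewrite /= Ht eqxx /=; apply/IH; exists o'; split=> //.
by rewrite -foldl_cat.
Qed.

Lemma preim_regular :
  regular (fun w => exists v, t_accepts T w v /\ dfa_accepts D v).
Proof.
apply: regular_ext (nfa_regular pre_nfa) => w; split.
  case/existsP=> [[q p] /andP [/andP [Hi /eqP Ep] /pre_naccP [o [Ho Hf]]]].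
  by exists o; split; [exists q|rewrite /dfa_accepts -Ep].
case=> v [[q [Hi Hv]] Hf]; apply/existsP; exists (q, dinit D).
rewrite /= Hi eqxx /=; apply/pre_naccP; exists v; split=> //.
Qed.
End Preim.

Lemma rational_preim (S L : finType) (h : transduction S L) (P : seq L -> Prop) :
  rational h -> regular P -> regular (fun w => exists v, h w = Some v /\ P v).
Proof.
case=> T [_ HT] [D HD].
apply: regular_ext (preim_regular T D) => w; split.
  by case=> v [H1 H2]; exists v; rewrite HT HD.
by case=> v [H1 H2]; exists v; rewrite -HT -HD.
Qed.

Definition tfun (S L : finType) (T : transducer S L) : transduction S L :=
  fun u => match excluded_middle_informative (exists w, t_accepts T u w) with
           | left H => Some (proj1_sig (constructive_indefinite_description _ H))
           | right _ => None
           end.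

Lemma tfun_spec (S L : finType) (T : transducer S L) :
  functional T -> forall u w, tfun T u = Some w <-> t_accepts T u w.
Proof.
move=> Hf u w; rewrite /tfun.
case: excluded_middle_informative => [H|H].
  case: constructive_indefinite_description => w' Hw' /=; split.
    by case=> <-.
  by move=> Hw; rewrite (Hf _ _ _ Hw' Hw).
by split=> // Hw; case: H; exists w.
Qed.

Lemma tfun_rational (S L : finType) (T : transducer S L) :
  functional T -> rational (tfun T).
Proof. by move=> Hf; exists T; split=> //; apply: tfun_spec. Qed.


Lemma min_exists (T : eqType) (lt : rel T) (l : seq T) (Q : T -> Prop) :
  transitive lt -> irreflexive lt -> (exists x, x \in l /\ Q x) ->
  exists x, [/\ x \in l, Q x & forall y, y \in l -> Q y -> ~~ lt y x].
Proof.
move=> Htr Hirr; elim: l => [|a l IH] [x [Hx HQ]] //.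
have [[y Hy]|Hn] := classic (exists x, x \in l /\ Q x).
  have [m [Hm HQm Hmin]] := IH (ex_intro _ y Hy).
  case: (classic (Q a /\ lt a m)) => [[HQa Ham]|Hn].
    exists a; split; rewrite ?inE ?eqxx //.
    move=> z; rewrite inE => /orP [/eqP ->|Hz] HQz; first by rewrite Hirr.
    by apply/negP => Hza; move: (Hmin z Hz HQz); rewrite (Htr _ _ _ Hza Ham).
  exists m; split; rewrite ?inE ?Hm ?orbT //.
  move=> z; rewrite inE => /orP [/eqP ->|Hz] HQz; last exact: Hmin.
  by apply/negP => Ham; apply: Hn.
have HQa : Q a.
  move: Hx; rewrite inE => /orP [/eqP <- //|Hx]; by case: Hn; exists x.
exists a; split; rewrite ?inE ?eqxx //.
move=> z; rewrite inE => /orP [/eqP ->|Hz] HQz; first by rewrite Hirr.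
by case: Hn; exists z.
Qed.

Lemma map_zip1 (S T : Type) (s : seq S) (t : seq T) :
  size s = size t -> map fst (zip s t) = s.
Proof. by elim: s t => [|a s IH] [|b t] //= [/IH ->]. Qed.

Lemma map_zip2 (S T : Type) (s : seq S) (t : seq T) :
  size s = size t -> map snd (zip s t) = t.
Proof. by elim: s t => [|a s IH] [|b t] //= [/IH ->]. Qed.

Lemma map_zip2f (S T R : Type) (g : T -> R) (s : seq S) (t : seq T) :
  size s = size t -> map (fun xp => g xp.2) (zip s t) = map g t.
Proof. by elim: s t => [|a s IH] [|b t] //= [/IH ->]. Qed.

Section Trans.
Variables (X L : finType) (T : transducer X L).

Definition cmax := \max_(t : tstate T * X * tstate T) size (tout T t.1.1 t.1.2 t.2).

Lemma tout_le q x q' : size (tout T q x q') <= cmax.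
Proof. exact: (@leq_bigmax _ (fun t : tstate T * X * tstate T => size (tout T t.1.1 t.1.2 t.2)) (q, x, q')). Qed.

Definition P := 'I_cmax.+1.

Fixpoint prodP (q : tstate T) (u : seq X) (p : seq nat) (o : seq L) : Prop :=
  match u, p with
  | [::], [::] => tfinal T q /\ o = [::]
  | a :: u', n :: p' => exists q' o', [/\ ttrans T q a q', size (tout T q a q') = n,
                                        prodP q' u' p' o' & o = tout T q a q' ++ o']
  | _, _ => False
  end.

Lemma prodP_produces q u p o : prodP q u p o -> produces T q u o.
Proof.
elim: u p q o => [|a u IH] [|n p] q o //= [q' [o' [H1 H2 H3 H4]]].
by exists q', o'; split=> //; split=> //; apply: IH H3.
Qed.

Lemma produces_prodP q u o : produces T q u o -> exists p, prodP q u p o.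
Proof.
elim: u q o => [|a u IH] q o /=; first by move=> H; exists [::].
case=> q' [o' [H1 [H2 H3]]]; have [p Hp] := IH _ _ H2.
by exists (size (tout T q a q') :: p), q', o'.
Qed.

Lemma prodP_size q u p o : prodP q u p o -> size p = size u /\ size o = sumn p.
Proof.
elim: u p q o => [|a u IH] [|n p] q o //=; first by case=> _ ->.
case=> q' [o' [H1 H2 H3 ->]]; have [E1 E2] := IH _ _ _ H3.
by rewrite size_cat E1 E2 H2.
Qed.

Lemma prodP_le q u p o : prodP q u p o -> all (fun n => n <= cmax) p.
Proof.
elim: u p q o => [|a u IH] [|n p] q o //= [q' [o' [H1 <- H3 _]]].
by rewrite tout_le (IH _ _ _ H3).
Qed.

Definition Real (wp : seq (X * P)%type) : Prop :=
  exists q o, tinit T q /\ prodP q (map fst wp) (map (fun xp => val xp.2) wp) o.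

Definition real_nfa : nfa (X * P)%type :=
  @NFA (X * P)%type (tstate T) (tinit T)
    (fun q xp q' => ttrans T q xp.1 q' && (size (tout T q xp.1 q') == val xp.2))
    (tfinal T).

Lemma real_naccP q wp :
  nacc real_nfa q wp <-> exists o, prodP q (map fst wp) (map (fun xp => val xp.2) wp) o.
Proof.
elim: wp q => [|[x p] wp IH] q /=.
  by split; [move=> H; exists [::]|case=> o []].
split.
  case/existsP=> q' /andP [/andP [Ht /eqP Hs] /IH [o Ho]].
  by exists (tout T q x q' ++ o), q', o.
case=> o [q' [o' [Ht Hs Ho _]]]; apply/existsP; exists q'.
by rewrite Ht Hs eqxx /=; apply/IH; exists o'.
Qed.

Lemma real_regular : regular Real.
Proof.
apply: regular_ext (nfa_regular real_nfa) => wp; split.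
  by case/existsP=> q /andP [Hi /real_naccP [o Ho]]; exists q, o.
by case=> q [o [Hi Ho]]; apply/existsP; exists q; rewrite /= Hi /=; apply/real_naccP; exists o.
Qed.

Definition ltP : rel P := fun a b => val a < val b.

Definition Smaller (wp : seq (X * P)%type) : Prop :=
  exists p' : seq P, [/\ size p' = size wp, Real (zip (map fst wp) p') &
                         lexltb ltP p' (map snd wp)].

Definition upd (s : option bool) (a b : nat) :=
  if a < b then Some true else if b < a then Some false else s.

Definition sm_nfa : nfa (X * P)%type :=
  @NFA (X * P)%type (tstate T * option bool)%type
    (fun qs => tinit T qs.1 && (qs.2 == None))
    (fun qs xp qs' => ttrans T qs.1 xp.1 qs'.1 &&
                      (qs'.2 == upd qs.2 (size (tout T qs.1 xp.1 qs'.1)) (val xp.2)))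
    (fun qs => tfinal T qs.1 && (qs.2 == Some true)).

Lemma sm_naccP q s wp :
  nacc sm_nfa (q, s) wp <-> exists (p' : seq P) o, [/\ size p' = size wp,
    prodP q (map fst wp) (map val p') o &
    lexltb ltP p' (map snd wp) || (p' == map snd wp) && (s == Some true)].
Proof.
elim: wp q s => [|[x p] wp IH] q s /=.
  split; first by case/andP=> H1 H2; exists [::], [::]; rewrite H2.
  by case=> [[|a p'] [o [//= _ [H1 _] H2]]]; rewrite H1.
split.
  case/existsP=> [[q' s'] /andP [/andP [Ht /eqP /= Es] /IH [p'' [o [Hs Ho Hl]]]]].
  exists (inord (size (tout T q x q')) :: p''), (tout T q x q' ++ o); split.
  - by rewrite /= Hs.
  - exists q', o; split=> //; by rewrite inordK // ltnS tout_le.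
  rewrite /=; move: Hl; case/orP=> [->//|/andP [/eqP Ep Hs']]; subst p''.
  rewrite eqxx /= lexltb_irr; last by move=> a; rewrite /ltP ltnn.
  have Hv : \val (@inord cmax (size (tout T q x q'))) = size (tout T q x q').
    by apply: inordK; rewrite ltnS tout_le.
  move: Hs'; rewrite Es /upd /ltP Hv.
  case: ltnP => //= H1; case: ltnP => //= H2 Hs'.
  have E : inord (size (tout T q x q')) = p :> P.
    by apply: val_inj; rewrite Hv; apply/eqP; rewrite eqn_leq H1 H2.
  by rewrite E eqxx Hs'.
case=> [[|a p'] [o [//= [Hs] [q' [o' [Ht Ha Ho _]]] Hl]]].
apply/existsP; exists (q', upd s (size (tout T q x q')) (val p)).
rewrite /= Ht eqxx /=; apply/IH; exists p', o'; split=> //.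
move: Hl; rewrite /ltP /upd Ha.
case/orP=> [/orP [H|/andP [E H]]|/andP [/eqP [E1 E2] Hs']].
- by rewrite H.
- by rewrite E H /= eqxx orbT.
- by rewrite E1 E2 ltnn eqxx /= Hs' orbT.
Qed.

Lemma sm_regular : regular Smaller.
Proof.
apply: regular_ext (nfa_regular sm_nfa) => wp; split.
  case/existsP=> [[q s] /andP [/andP [Hi /eqP /= Es] /sm_naccP [p' [o [Hs Ho Hl]]]]].
  move: Hl; rewrite Es andbF orbF => Hl.
  exists p'; split=> //; exists q, o; split=> //.
  by rewrite map_zip1 ?size_map ?Hs // map_zip2f ?size_map ?Hs.
case=> p' [Hs [q [o [Hi Ho]]] Hl]; apply/existsP; exists (q, None).
rewrite /= Hi eqxx /=; apply/sm_naccP; exists p', o; split=> //; last by rewrite Hl.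
by move: Ho; rewrite map_zip1 ?size_map ?Hs // map_zip2f ?size_map ?Hs.
Qed.

Definition Canon (wp : seq (X * P)%type) : Prop := Real wp /\ ~ Smaller wp.

Lemma canon_regular : regular Canon.
Proof. exact: regular_and real_regular (regular_not sm_regular). Qed.

Lemma ltP_irr : irreflexive ltP.
Proof. by move=> a; rewrite /ltP ltnn. Qed.
Lemma ltP_tr : transitive ltP.
Proof. move=> b a c; rewrite /ltP; exact: ltn_trans. Qed.
Lemma ltP_tot a b : a != b -> ltP a b || ltP b a.
Proof.
move=> Hab; rewrite /ltP; case: ltngtP => // E.
by move: Hab; rewrite (val_inj E) eqxx.
Qed.

Lemma canon_unique (w : seq X) (p1 p2 : seq P) : size p1 = size w -> size p2 = size w ->
  Canon (zip w p1) -> Canon (zip w p2) -> p1 = p2.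
Proof.
move=> H1 H2 [R1 N1] [R2 N2]; apply/eqP; apply/negP => /negP Hne.
have := lexltb_total ltP_irr ltP_tot (etrans H1 (esym H2)) Hne.
case/orP=> Hl.
  apply: N2; exists p1; split; first by rewrite size_zip H2 H1 minnn.
    by rewrite map_zip1 ?H1 ?H2.
  by rewrite map_zip2 ?H1 ?H2.
apply: N1; exists p2; split; first by rewrite size_zip H2 H1 minnn.
  by rewrite map_zip1 ?H1 ?H2.
by rewrite map_zip2 ?H1 ?H2.
Qed.

Lemma canon_exists (w : seq X) : (exists v, t_accepts T w v) ->
  exists p : seq P, size p = size w /\ Canon (zip w p).
Proof.
case=> v [q [Hi Hv]]; have [ps Hps] := produces_prodP Hv.
have [Hsz _] := prodP_size Hps.
have Hle := prodP_le Hps.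
have Hex : exists x, x \in allseqs P (size w) /\ Real (zip w x).
  exists (map inord ps); rewrite mem_allseqs size_map Hsz eqxx; split=> //.
  exists q, v; split=> //.
  rewrite map_zip1 ?size_map ?Hsz // map_zip2f ?size_map ?Hsz //.
  suff -> : [seq \val i | i <- [seq (@inord cmax) i | i <- ps]] = ps by [].
  elim: ps Hle {Hps Hsz} => [|n ps IH] //= /andP [Hn Hle].
  by rewrite inordK ?ltnS // IH.
have [m [Hm HR Hmin]] := min_exists (lexltb_trans ltP_tr) (lexltb_irr ltP_irr) Hex.
have Hms : size m = size w by apply/eqP; rewrite -mem_allseqs.
exists m; split=> //; split=> // [[p' [Hs HR' Hl]]].
move: HR'; rewrite map_zip1 ?Hms // => HR'.
have : p' \in allseqs P (size w) by rewrite mem_allseqs Hs size_zip Hms minnn.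
move/Hmin/(_ HR'); rewrite map_zip2 ?Hms // in Hl; by rewrite Hl.
Qed.

End Trans.


Section Lift.
Variables (X L B : finType) (T : transducer X L) (prec : rel B).

Definition blocks : seq (seq B) := flatten [seq allseqs B n | n <- iota 0 (cmax T).+1].

Lemma mem_blocks u : (u \in blocks) = (size u <= cmax T).
Proof.
apply/flatten_mapP/idP => [[n Hn Hu]|Hu].
  by move: Hn Hu; rewrite mem_iota mem_allseqs add0n ltnS => Hn /eqP ->.
by exists (size u); rewrite ?mem_iota ?mem_allseqs // add0n ltnS.
Qed.

Definition Bl : finType := seq_sub blocks.

Definition precB : rel Bl := fun x y =>
  (size (val x) < size (val y)) || (size (val x) == size (val y)) && lexltb prec (val x) (val y).

Lemma precB_lin : strict_linear prec -> strict_linear precB.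
Proof.
case=> Hirr0 Htr0 Htot.
have Hirr : irreflexive prec by move=> x; apply/negbTE.
have Htr : transitive prec by move=> y x z; apply: Htr0.
split.
- by move=> a; rewrite /precB ltnn lexltb_irr // andbF.
- move=> a b c; rewrite /precB.
  case/orP=> [H1|/andP [/eqP E1 H1]] /orP [H2|/andP [/eqP E2 H2]].
  + by rewrite (ltn_trans H1 H2).
  + by rewrite -E2 H1.
  + by rewrite E1 H2.
  + by rewrite E1 E2 eqxx (lexltb_trans Htr H1 H2) orbT.
- move=> a b Hab; rewrite /precB.
  case: (ltngtP (size (val a)) (size (val b))) => //= E.
  have Hne : val a != val b by apply: contra Hab => /eqP /val_inj ->.
  by have := lexltb_total Hirr Htot E Hne.
Qed.

Definition Tl : transducer (X * Bl)%type (L * B)%type :=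
  @Transducer (X * Bl)%type (L * B)%type (tstate T) (tinit T) (tfinal T)
    (fun q xb q' => ttrans T q xb.1 q' && (size (val xb.2) == size (tout T q xb.1 q')))
    (fun q xb q' => zip (tout T q xb.1 q') (val xb.2)).

Lemma lift_produces q (wb : seq (X * Bl)%type) o :
  produces Tl q wb o <-> exists o0,
    prodP (T:=T) q (map fst wb) (map (fun xb => size (val xb.2)) wb) o0 /\
    o = zip o0 (flatten (map (fun xb => val xb.2) wb)).
Proof.
elim: wb q o => [|[x b] wb IH] q o /=.
  by split; [case=> H ->; exists [::]|case=> o0 [[H ->] ->]].
split.
  case=> q' [w' [/andP [Ht /eqP Hs] [/IH [o0 [Ho0 ->]] ->]]].
  exists (tout T q x q' ++ o0); split; first by exists q', o0; split.
  by rewrite zip_cat.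
case=> o0 [[q' [o' [Ht Hs Ho ->]]] ->].
exists q', (zip o' (flatten [seq val xb.2 | xb <- wb])); split.
  by rewrite Ht Hs eqxx.
split; first by apply/IH; exists o'.
by rewrite zip_cat.
Qed.

Lemma lift_functional : functional T -> functional Tl.
Proof.
move=> Hf wb o1 o2 [q1 [Hi1 /lift_produces [a1 [H1 ->]]]] [q2 [Hi2 /lift_produces [a2 [H2 ->]]]].
have -> // : a1 = a2.
apply: (Hf (map fst wb)).
  by exists q1; split=> //; apply: prodP_produces H1.
by exists q2; split=> //; apply: prodP_produces H2.
Qed.

Lemma lift_dom (wb : seq (X * Bl)%type) o :
  t_accepts Tl wb o -> exists v, t_accepts T (map fst wb) v.
Proof.
case=> q [Hi /lift_produces [o0 [H _]]].
by exists o0, q; split=> //; apply: prodP_produces H.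
Qed.

Lemma flat_mono (x y : seq Bl) :
  transitive prec ->
  map (fun b => size (val b)) x = map (fun b => size (val b)) y ->
  lexltb precB x y -> lexltb prec (flatten (map val x)) (flatten (map val y)).
Proof.
move=> Htr; elim: x y => [|a x IH] [|b y] //= [Hab Hxy].
rewrite lexltb_cat //; case/orP=> [H|/andP [/eqP E H]].
  by rewrite IH.
subst y; rewrite eqxx /=; apply/orP; right.
by move: H; rewrite /precB Hab ltnn eqxx.
Qed.

End Lift.


Lemma cat_opt_nil (G : finType) (l : seq (option (seq G))) :
  (forall x, x \in l -> x = Some [::]) -> cat_opt l = Some [::].
Proof.
elim: l => [|a l IH] H //=.
have IH' : cat_opt l = Some [::] by apply: IH => x Hx; apply: H; rewrite inE Hx orbT.
by rewrite (H a (mem_head _ _)) /= IH'.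
Qed.

Lemma cat_opt_none (G : finType) (l : seq (option (seq G))) :
  None \in l -> cat_opt l = None.
Proof.
elim: l => [|a l IH] //=; rewrite inE => /orP [/eqP <- //|H].
by rewrite IH //; case: a.
Qed.

Lemma cat_opt_filter (G : finType) (T : eqType) (F : T -> option (seq G)) (a : pred T) s :
  (forall x, x \in s -> ~~ a x -> F x = Some [::]) ->
  cat_opt (map F s) = cat_opt (map F (filter a s)).
Proof.
elim: s => [|x s IH] H //=.
have IH' : cat_opt (map F s) = cat_opt (map F (filter a s)).
  by apply: IH => y Hy; apply: H; rewrite inE Hy orbT.
case Ha: (a x) => /=; first by rewrite IH'.
rewrite (H x (mem_head _ _)) ?Ha //= -IH'.
by case: (cat_opt _).
Qed.

Lemma map_zip_snd (S T R : Type) (g : T -> R) (s : seq S) (t : seq T) :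
  map (fun xy => (xy.1, g xy.2)) (zip s t) = zip s (map g t).
Proof. by elim: s t => [|a s IH] [|b t] //=; rewrite IH. Qed.

Lemma Q0 (X L G : finType) (f : transduction L G) (h : transduction X L) (A : dfa X) :
  simple f -> rational h ->
  simple (fun w => if dfa_accepts A w then Some [::] else obind f (h w)).
Proof.
case=> n [Ls [ws [Hreg [Hdisj [Hsz Hspec]]]]] Hh.
pose L' := fun (i : 'I_n.+1) (w : seq X) =>
  match unlift ord0 i with
  | Some i' => ~~ dfa_accepts A w /\ exists v, h w = Some v /\ Ls i' v
  | None => dfa_accepts A w
  end.
pose w' := fun (i : 'I_n.+1) => if unlift ord0 i is Some i' then ws i' else [::].
exists n.+1, L', w'; split; [|split; [|split]].
- move=> i; rewrite /L'; case: (unlift ord0 i) => [i'|]; last exact: regular_dfa.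
  apply: regular_and.
    by apply: regular_ext (regular_not (regular_dfa A)) => u; split=> /negP.
  exact: rational_preim.
- move=> i j w; rewrite /L'; case: unliftP => [i' ->|->]; case: unliftP => [j' ->|->] //.
  + move=> Hij [_ [v1 [H1 L1]]] [_ [v2 [H2 L2]]].
    move: H1; rewrite H2 => [[E]]; subst v2.
    apply: (Hdisj i' j' v1) => //; apply: contra Hij => /eqP -> //.
  + by move=> _ [/negP H _] H'.
  + by move=> _ H' [/negP H _].
- by move=> i; rewrite /w'; case: (unlift ord0 i).
move=> w; split.
  move=> i; rewrite /L' /w'; case: (unlift ord0 i) => [i'|]; last by move=> ->.
  case=> /negbTE -> [v [-> Hv]] /=.
  by apply: (proj1 (Hspec v)).
move=> Hn.
have HA : ~~ dfa_accepts A w.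
  by apply/negP => HA; apply: (Hn ord0); rewrite /L' unlift_none.
rewrite (negbTE HA).
case E: (h w) => [v|] //=.
apply: (proj2 (Hspec v)) => i Hi; apply: (Hn (lift ord0 i)).
by rewrite /L' liftK; split=> //; exists v.
Qed.


Lemma Qstep j :
  (forall (X L G : finType) (f : transduction L G) (h : transduction X L) (A : dfa X),
     lexk j f -> rational h ->
     lexk j (fun w => if dfa_accepts A w then Some [::] else obind f (h w))) ->
  forall (X L G : finType) (f : transduction L G) (h : transduction X L) (A : dfa X),
     lexk j.+1 f -> rational h ->
     lexk j.+1 (fun w => if dfa_accepts A w then Some [::] else obind f (h w)).
Proof.
move=> IH X L G f h A [B [prec [Hlin [f' [Hf' Hmap]]]]] [T [Hfun HT]].
have [Hirr0 Htr0 Htot] := Hlin.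
have Hirr : irreflexive prec by move=> x; apply/negbTE.
have Htr : transitive prec by move=> y x z; apply: Htr0.
pose psize := fun b : Bl B T => @inord (cmax T) (size (val b)).
have Hpsize : forall b : Bl B T, val (psize b) = size (val b).
  by move=> b; apply: inordK; rewrite ltnS -(mem_blocks T); exact: (ssvalP b).
pose Dom := fun w : seq X => exists v, t_accepts T w v.
have HDom : regular Dom.
  pose Dt := @DFA L unit tt (fun _ _ => tt) (fun _ => true).
  apply: regular_ext (preim_regular T Dt) => w; split.
    by case=> v [Hv _]; exists v.
  by case=> v Hv; exists v.
pose Rp := fun wb : seq (X * Bl B T)%type => dfa_accepts A (map fst wb) \/
  (Dom (map fst wb) /\ ~ Canon (T:=T) (map (fun xb => (xb.1, psize xb.2)) wb)).
have HRp : regular Rp.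
  apply: regular_or; first exact: (regular_preim fst (regular_dfa A)).
  apply: regular_and; first exact: (regular_preim fst HDom).
  exact: (regular_preim (fun xb : (X * Bl B T)%type => (xb.1, psize xb.2)) (regular_not (canon_regular T))).
case: HRp => D HD.
have Hfun' := @lift_functional X L B T Hfun.
pose h' := tfun (Tl B T).
have Hh' := tfun_spec Hfun'.
pose f'' := fun wb => if dfa_accepts D wb then Some [::] else obind f' (h' wb).
have Hf'' : lexk j f'' := IH _ _ _ f' h' D Hf' (tfun_rational Hfun').
exists (Bl B T), (precB prec); split; first exact: precB_lin.
exists f''; split=> // w.
have [s Hs] := lex_enum_exists (size w) (precB_lin T Hlin).
exists s; split=> //.
have Hmem := fun b => lex_enum_mem b Hs.
case HA: (dfa_accepts A w).
  symmetry; apply: cat_opt_nil => x /mapP [b Hb ->].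
  have Hbs : size b = size w by apply/eqP; rewrite -Hmem.
  rewrite /f''; suff -> : dfa_accepts D (zip w b) by [].
  by apply/HD; left; rewrite map_zip1 ?Hbs ?HA.
case Ehw: (h w) => [v|] /=; last first.
  have HnD : ~ Dom w by case=> v Hv; move: Ehw; rewrite (proj2 (HT w v) Hv).
  have Hb0 : ([::] : seq B) \in blocks B T by rewrite mem_blocks.
  pose b0 : Bl B T := Sub [::] Hb0.
  symmetry; apply: cat_opt_none; apply/mapP; exists (nseq (size w) b0).
    by rewrite Hmem size_nseq.
  rewrite /f''.
  have -> : dfa_accepts D (zip w (nseq (size w) b0)) = false.
    apply/negbTE/negP => /HD [|[]]; rewrite map_zip1 ?size_nseq //; by rewrite HA.
  case Eh': (h' _) => [o|] //=.
  by case: HnD; move: (lift_dom (proj1 (Hh' _ _) Eh')); rewrite map_zip1 ?size_nseq.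
have HD' : Dom w by exists v; apply/HT.
have [pc [Hpcs Hpc]] := canon_exists HD'.
pose valid := fun b : seq (Bl B T) => map psize b == pc.
have [q [o [Hi Ho]]] := Hpc.1.
rewrite map_zip1 ?Hpcs // map_zip2f ?Hpcs // in Ho.
have Eo : o = v.
  have : h w = Some o by apply/HT; exists q; split=> //; exact: prodP_produces Ho.
  by rewrite Ehw => [[]].
subst o.
have [_ Hsv] := prodP_size Ho.
have Hsz : forall b : seq (Bl B T), valid b ->
    map (fun x => size (val x)) b = map val pc.
  move=> b /eqP <-; rewrite -map_comp; apply: eq_map => x /=; by rewrite Hpsize.
have Hvalid : forall b, b \in s -> valid b -> f'' (zip w b) = f' (zip v (flatten (map val b))).
  move=> b Hb Hvb.
  have Hbs : size b = size w by apply/eqP; rewrite -Hmem.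
  rewrite /f''.
  have -> : dfa_accepts D (zip w b) = false.
    apply/negbTE/negP => /HD [|[_ []]]; rewrite ?map_zip1 ?Hbs //; first by rewrite HA.
    by rewrite map_zip_snd (eqP Hvb).
  have -> : h' (zip w b) = Some (zip v (flatten (map val b))).
    apply/Hh'; exists q; split=> //; apply/lift_produces; exists v; split.
      by rewrite map_zip1 ?Hbs // (@map_zip2f _ _ _ (fun x : Bl B T => size (val x))) ?Hbs // Hsz.
    by rewrite (@map_zip2f _ _ _ (fun x : Bl B T => val x)) ?Hbs.
  by [].
have Hinvalid : forall b, b \in s -> ~~ valid b -> f'' (zip w b) = Some [::].
  move=> b Hb Hnv.
  have Hbs : size b = size w by apply/eqP; rewrite -Hmem.
  rewrite /f''; suff -> : dfa_accepts D (zip w b) by [].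
  apply/HD; right; rewrite map_zip1 ?Hbs //; split=> // HC.
  rewrite map_zip_snd in HC.
  have E : map psize b = pc by apply: (canon_unique (T:=T)) HC Hpc; rewrite ?size_map.
  by move: Hnv; rewrite /valid E eqxx.
rewrite (@cat_opt_filter _ _ (fun b => f'' (zip w b)) valid s Hinvalid).
have -> : [seq f'' (zip w b) | b <- filter valid s] =
          [seq f' (zip v b) | b <- map (fun b => flatten (map val b)) (filter valid s)].
  rewrite -map_comp; apply/eq_in_map => b; rewrite mem_filter => /andP [Hv Hb].
  exact: Hvalid.
have [s0 [Hs0 Hf]] := Hmap v.
rewrite Hf; congr cat_opt; congr map.
have [Hm0 Hsort0] := proj1 (lex_enum_sorted _ _ Htr Hirr) Hs0.
have [HBirr0 HBtr0 _] := precB_lin T Hlin.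
have HBirr : irreflexive (precB (T:=T) prec) by move=> x; apply/negbTE.
have HBtr : transitive (precB (T:=T) prec) by move=> y x z; apply: HBtr0.
have [_ Hsort] := proj1 (lex_enum_sorted _ _ HBtr HBirr) Hs.
symmetry; apply: (irr_sorted_eq (lexltb_trans Htr) (lexltb_irr Hirr)) => //.
- apply: (homo_sorted_in (P := valid)).
  + move=> x y Hx Hy; apply: flat_mono => //; by rewrite Hsz // Hsz.
  + exact: filter_all.
  + exact: sorted_filter (lexltb_trans HBtr) _ _ Hsort.
- move=> b; rewrite Hm0; apply/mapP/idP => [[x Hx ->]|Hb].
  rewrite mem_filter in Hx; case/andP: Hx => Hvx Hxs.
  by rewrite size_flatten /shape -map_comp (Hsz _ Hvx) Hsv.
pose sh := map val pc.
have Hb0 : ([::] : seq B) \in blocks B T by rewrite mem_blocks.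
pose b0 : Bl B T := Sub [::] Hb0.
pose x := map (insubd b0) (reshape sh b).
have Hshape : shape (reshape sh b) = sh by apply: reshapeKl; rewrite (eqP Hb) Hsv.
have Hvx : map val x = reshape sh b.
  rewrite -map_comp; apply: map_id_in => r Hr /=; apply: insubdK.
  rewrite unfold_in /= mem_blocks.
  have : size r \in sh by rewrite -Hshape; apply: map_f.
  by case/mapP=> p _ ->; rewrite -ltnS; exact: ltn_ord p.
exists x; last by rewrite Hvx reshapeKr // (eqP Hb) Hsv.
rewrite mem_filter; apply/andP; split.
  apply/eqP; have -> : map psize x = map (fun n => @inord (cmax T) n) (shape (map val x)).
    by rewrite /shape -!map_comp.
  rewrite Hvx Hshape /sh -map_comp -[RHS]map_id; apply: eq_map => p /=; exact: inord_val.
by rewrite Hmem size_map size_reshape /sh size_map Hpcs.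
Qed.


Lemma Qall j : forall (X L G : finType) (f : transduction L G) (h : transduction X L) (A : dfa X),
     lexk j f -> rational h ->
     lexk j (fun w => if dfa_accepts A w then Some [::] else obind f (h w)).
Proof.
elim: j => [|j IH]; first by move=> X L G f h A; apply: Q0.
exact: Qstep IH.
Qed.

Theorem mainTheorem18 (k : nat) : 1 <= k ->
  forall (S L G : finType) (g : transduction S L) (f : transduction L G),
    rational g -> lexk k f -> lexk k (compose f g).
Proof.
move=> _ S L G g f Hg Hf.
exact: (Qall (@DFA S unit tt (fun _ _ => tt) (fun _ => false)) Hf Hg).
Qed.
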